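(* Let $n\ge1$. For every $(x,y,z)\in V_n$: the length of $\tau_n(xyz)\in(V_n)^*$ is $n+1-x$; the first item of $\tau_n(xyz)$ is $(0,x-y+1,n)$ or $(0,x-y+1,n+1)$; and exactly $z-x$ items of $\tau_n(xyz)$ have last coordinate equal to $n$. In particular, $\tau_n$ is injective.
   Context: $V_n=\{(v_0,v_1,v_2)\in\mathbb{Z}^3: 0\le v_0\le v_1\le 1,\ v_1\le v_2\le n+1\}$, elements written as words $v_0v_1v_2$; write $\bar n=n+1$. $\tau_n:V_n\to V_n^*$ (finite sequences over $V_n$) is defined by $\tau_n(xyz)=(0,x-y+1,n)\cdot(11n)^{z-x-1}\cdot(11\bar n)^{n+1-z}$ if $x\ne z$, and $\tau_n(xyz)=(0,x-y+1,n+1)\cdot(11\bar n)^{n-z}$ if $x=z$, where $\cdot$ is concatenation and exponents denote repetition. *)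

(* Defs.v *)
From mathcomp Require Import all_boot.
Set Implicit Arguments. Unset Strict Implicit. Unset Printing Implicit Defensive.

Definition word := (nat * nat * nat)%type.

Definition inV (n : nat) (v : word) : bool :=
  let: (v0, v1, v2) := v in [&& v0 <= v1, v1 <= 1, v1 <= v2 & v2 <= n.+1].

(* tau_n(xyz).  The middle coordinate x - y + 1 is written x + 1 - y, which agrees
   with the integer value whenever y <= x + 1 (always the case on V_n). *)
Definition tau (n : nat) (v : word) : seq word :=
  let: (x, y, z) := v in
  if x != z then
    (0, x + 1 - y, n) :: nseq (z - x - 1) (1, 1, n) ++ nseq (n + 1 - z) (1, 1, n.+1)
  else
    (0, x + 1 - y, n.+1) :: nseq (n - z) (1, 1, n.+1).

(* Main.v *)
Require Import Defs.
From mathcomp Require Import all_boot.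
From mathcomp Require Import zify.

Lemma part1 (n : nat) (hn : 1 <= n) :
  (forall x y z : nat, inV n (x, y, z) ->
     [/\ size (tau n (x, y, z)) = n + 1 - x,
         ohead (tau n (x, y, z)) = Some (0, x + 1 - y, n)
           \/ ohead (tau n (x, y, z)) = Some (0, x + 1 - y, n.+1)
       & count (fun w : word => w.2 == n) (tau n (x, y, z)) = z - x]).
Proof.
move=> x y z /and4P [h1 h2 h3 h4] /=.
case: eqP => [<-|hxz] /=.
  rewrite size_nseq count_nseq /=.
  rewrite (_ : (n.+1 == n) = false); last by apply/eqP; lia.
  split; [lia | by right | lia].
rewrite size_cat !size_nseq count_cat !count_nseq /= eqxx.
rewrite (_ : (n.+1 == n) = false); last by apply/eqP; lia.
split; [lia | by left | lia].
Qed.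

Theorem lemma5p1 (n : nat) (hn : 1 <= n) :
  (forall x y z : nat, inV n (x, y, z) ->
     [/\ size (tau n (x, y, z)) = n + 1 - x,
         ohead (tau n (x, y, z)) = Some (0, x + 1 - y, n)
           \/ ohead (tau n (x, y, z)) = Some (0, x + 1 - y, n.+1)
       & count (fun w : word => w.2 == n) (tau n (x, y, z)) = z - x])
  /\ (forall v w : word, inV n v -> inV n w -> tau n v = tau n w -> v = w).
Proof.
split; first exact: part1.
move=> [[x y] z] [[x' y'] z'] hv hw he.
have [s1 h1 c1] := @part1 n hn _ _ _ hv.
have [s2 h2 c2] := @part1 n hn _ _ _ hw.
move: (hv) (hw) => /and4P [a1 a2 a3 a4] /and4P [b1 b2 b3 b4].
have ex : x = x' by rewrite he s2 in s1; lia.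
have ez : z = z' by rewrite he c2 in c1; lia.
have ey : x + 1 - y = x' + 1 - y'.
  by case: h1 => h1; case: h2 => h2; rewrite he h2 in h1; case: h1.
have : y = y' by lia.
by move=> ->; rewrite ex ez.
Qed.
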